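(* There is no six-qubit stabilizer code encoding one qubit that has CSS structure and corrects an arbitrary single-qubit error. That is, there do not exist five independent, pairwise commuting operators $g_1,\dots,g_5$ in the six-qubit Pauli group, each of which is a tensor product of only $X$ and $I$ factors or only of $Z$ and $I$ factors (up to sign), such that the group $S=\langle g_1,\dots,g_5\rangle$ satisfies: for every pair $E_a,E_b\in\{I\}\cup\{X_i,Y_i,Z_i:i=1,\dots,6\}$, the operator $E_a^\dagger E_b$ either anticommutes with some element of $S$ or lies in $S$ up to phase.
   Context: $X,Y,Z$ are the single-qubit Pauli matrices and $P_i$ denotes the operator acting as $P$ on qubit $i$ and as identity elsewhere. Generators are independent if none is, up to phase, a product of the others. *)

(* Defs.v *)
From mathcomp Require Import all_boot.
Set Implicit Arguments. Unset Strict Implicit. Unset Printing Implicit Defensive.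

Inductive P1 := PI | PX | PY | PZ.

(* product of single-qubit Paulis: a * b = i^k * c  with (k, c) = mul1 a b *)
Definition mul1 (a b : P1) : nat * P1 :=
  match a, b with
  | PI, c => (0, c)
  | c, PI => (0, c)
  | PX, PX => (0, PI) | PY, PY => (0, PI) | PZ, PZ => (0, PI)
  | PX, PY => (1, PZ) | PY, PX => (3, PZ)
  | PY, PZ => (1, PX) | PZ, PY => (3, PX)
  | PZ, PX => (1, PY) | PX, PZ => (3, PY)
  end.

(* an n-qubit Pauli operator  i^phase * (op 0) (x) ... (x) (op (n-1)) *)
Record pauli (n : nat) := Pauli { phase : nat; op : 'I_n -> P1 }.

Definition pid (n : nat) : pauli n := Pauli 0 (fun _ => PI).

Definition pmul n (p q : pauli n) : pauli n :=
  Pauli (phase p + phase q + \sum_(i < n) (mul1 (op p i) (op q i)).1)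
        (fun i => (mul1 (op p i) (op q i)).2).

(* adjoint: Pauli matrices are Hermitian, (i^k)^* = i^(3k) *)
Definition padj n (p : pauli n) : pauli n := Pauli (3 * phase p) (op p).

Definition pneg n (p : pauli n) : pauli n := Pauli (phase p + 2) (op p).

(* equality of operators (phases are mod 4) *)
Definition peq n (p q : pauli n) : Prop :=
  phase p = phase q %[mod 4] /\ forall i, op p i = op q i.

Definition eq_up_to_phase n (p q : pauli n) : Prop := forall i, op p i = op q i.

Definition pcommute n (p q : pauli n) : Prop := peq (pmul p q) (pmul q p).
Definition panticommute n (p q : pauli n) : Prop := peq (pmul p q) (pneg (pmul q p)).

Inductive in_gen n m (P : pred 'I_m) (g : 'I_m -> pauli n) : pauli n -> Prop :=
  | gen_one : in_gen P g (pid n)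
  | gen_g i : P i -> in_gen P g (g i)
  | gen_mul p q : in_gen P g p -> in_gen P g q -> in_gen P g (pmul p q).

Definition independent n m (g : 'I_m -> pauli n) : Prop :=
  forall j, ~ exists s, in_gen (fun i => i != j) g s /\ eq_up_to_phase s (g j).

(* +- tensor product of only X and I factors / only Z and I factors *)
Definition X_type n (p : pauli n) : Prop :=
  ~~ odd (phase p) /\ forall i, op p i = PI \/ op p i = PX.
Definition Z_type n (p : pauli n) : Prop :=
  ~~ odd (phase p) /\ forall i, op p i = PI \/ op p i = PZ.

Definition err n (i : 'I_n) (a : P1) : pauli n :=
  Pauli 0 (fun j => if j == i then a else PI).

Definition is_error n (E : pauli n) : Prop :=
  E = pid n \/ exists i a, a <> PI /\ E = err i a.

(* Main.v *)
Require Import Defs.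
From Stdlib Require Import Lia.
From mathcomp Require Import all_boot all_algebra.
Set Implicit Arguments. Unset Strict Implicit. Unset Printing Implicit Defensive.
Fixpoint allv (n : nat) : seq (seq bool) :=
  if n is n'.+1 then [seq b :: s | b <- [:: false; true], s <- allv n'] else [:: [::]].
Fixpoint dotn (u v : seq bool) : nat :=
  match u, v with a :: u', b :: v' => (a && b) + dotn u' v' | _, _ => 0 end.
Definition dotb u v := odd (dotn u v).
Definition unitv (i : nat) := [seq k == i | k <- iota 0 6].
Definition pairv (i j : nat) := [seq (k == i) || (k == j) | k <- iota 0 6].
Definition E2 : seq (seq bool) :=
  [seq unitv i | i <- iota 0 6] ++ flatten [seq [seq pairv i j | j <- iota i.+1 (5 - i)] | i <- iota 0 6].
Fixpoint greedy (cs : seq (seq bool)) (acc : seq (seq bool * nat)) :=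
  match cs with
  | [::] => acc
  | f :: cs' =>
    if all (fun fp => ~~ nth false f fp.2) acc && has id f
    then greedy cs' (rcons acc (f, find id f)) else greedy cs' acc
  end.
Fixpoint tri (C : seq (seq bool * nat)) :=
  match C with [::] => true | fp :: C' => all (fun fq => ~~ nth false fq.1 fp.2) C' && tri C' end.
Definition perp f (us : seq (seq bool)) := all (fun u => ~~ dotb f u) us.
Definition checkcert (C : seq (seq bool * nat)) us :=
  all (fun fp => (fp.1 \in E2) && perp fp.1 us && (fp.2 < 6) && nth false fp.1 fp.2) C && tri C.
Definition cert us := greedy [seq f <- E2 | perp f us] [::].
Definition inspan2 (e u1 u2 : seq bool) :=
  has (fun c : bool * bool => all (fun k => nth false e k == xorb (c.1 && nth false u1 k) (c.2 && nth false u2 k)) (iota 0 6))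
   [:: (false,false); (false,true); (true,false); (true,true)].
Definition check0 := checkcert (cert [::]) [::] && (6 <= size (cert [::])).
Definition check1 := all (fun u => checkcert (cert [:: u]) [:: u] && (5 <= size (cert [:: u]))) (allv 6).
Definition check2 := all (fun u1 => all (fun u2 => let C := cert [:: u1; u2] in
   checkcert C [:: u1; u2] && ((4 <= size C) || (size C == 3) &&
     has (fun e => (e \in E2) && perp e [seq fp.1 | fp <- C] && ~~ inspan2 e u1 u2) E2)) (allv 6)) (allv 6).
Lemma check0_ok : check0. Proof. by vm_compute. Qed.
Lemma check1_ok : check1. Proof. by vm_compute. Qed.
Lemma check2_ok : check2. Proof. by vm_compute. Qed.
Lemma E2_size : all (fun f => size f == 6) E2. Proof. by vm_compute. Qed.

Import GRing.Theory.
Local Open Scope ring_scope.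

Lemma F2_cases (x : 'F_2) : x = 0 \/ x = 1.
Proof. case: x => [[|[|n]] H]; [left|right|by []]; exact/val_inj. Qed.

Lemma natF2 n : (n%:R : 'F_2) = (odd n)%:R.
Proof. by rewrite -(Fp_nat_mod (erefl : prime 2)) modn2. Qed.

Lemma F2_11 : (1 + 1 : 'F_2) = 0.
Proof. by rewrite -mulr2n natF2. Qed.

Lemma F2_xx (x : 'F_2) : x + x = 0.
Proof. by case: (F2_cases x) => ->; rewrite ?addr0 ?F2_11. Qed.

Lemma b2F_inj (a b : bool) : (a%:R : 'F_2) = b%:R -> a = b.
Proof. by case: a; case: b => //= /eqP; rewrite ?oner_eq0 // eq_sym oner_eq0. Qed.

Definition toF2 (s : seq bool) : 'rV['F_2]_6 := \row_k (nth false s k)%:R.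
Definition enc (v : 'rV['F_2]_6) : seq bool := [seq v 0 k == 1 | k <- enum 'I_6].

Lemma size_enc v : size (enc v) = 6%N.
Proof. by rewrite size_map size_enum_ord. Qed.

Lemma toF2_enc v : toF2 (enc v) = v.
Proof.
apply/rowP => k; rewrite mxE (nth_map ord0) ?size_enum_ord // nth_ord_enum.
by case: (F2_cases (v 0 k)) => ->.
Qed.

Lemma allv_mem n s : size s = n -> s \in allv n.
Proof.
elim: n s => [|n IH] [|b s] //= [Hs].
by case: b; rewrite !mem_cat map_f ?orbT // IH.
Qed.

Lemma sum_dotn n u v : size u = n -> size v = n ->
  (\sum_(k < n) ((nth false u k && nth false v k) : nat))%N = dotn u v.
Proof.
elim: n u v => [|n IH] [|a u] [|b v] //=; rewrite ?big_ord0 // => [[Hu]] [Hv].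
by rewrite big_ord_recl /= -(IH u v).
Qed.

Lemma dotF2 f u : size f = 6%N -> size u = 6%N ->
  (toF2 f *m (toF2 u)^T) 0 0 = (dotb f u)%:R.
Proof.
move=> Hf Hu; rewrite !mxE /dotb -natF2 -(sum_dotn Hf Hu) natr_sum.
apply: eq_bigr => k _; rewrite !mxE.
by case: (nth false f k); case: (nth false u k); rewrite /= ?mulr1 ?mulr0.
Qed.

Lemma mulTr_entry m (e : 'rV['F_2]_6) (R : 'M_(m,6)) j :
  (e *m R^T) 0 j = (e *m (row j R)^T) 0 0.
Proof. by rewrite !mxE; apply: eq_bigr => k _; rewrite !mxE. Qed.

Lemma E2_size6 f : f \in E2 -> size f = 6%N.
Proof. by move=> H; apply/eqP; exact: (allP E2_size). Qed.

Definition FM (C : seq (seq bool * nat)) : 'M['F_2]_(size C, 6) :=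
  \matrix_(i < size C) toF2 (nth ([::], 0%N) C i).1.

Lemma tri_nth C (i j : nat) : tri C -> (i < j)%N -> (j < size C)%N ->
  ~~ nth false (nth ([::],0%N) C j).1 (nth ([::],0%N) C i).2.
Proof.
elim: C i j => [|fp C IH] [|i] [|j] //=.
  by move=> /andP[Hall _] _ Hj; exact: (allP Hall) _ (mem_nth _ Hj).
by move=> /andP[_ Ht] Hij Hj; apply: IH.
Qed.

Lemma cert_rank C us : checkcert C us -> (size C <= \rank (FM C))%N.
Proof.
move=> /andP[Hall Htri].
have Hc (j : 'I_(size C)) := allP Hall _ (mem_nth ([::],0%N) (ltn_ord j)).
pose p (j : 'I_(size C)) := (nth ([::],0%N) C j).2.
have Hp j : (p j < 6)%N by case/andP: (Hc j) => /andP[_ ->].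
pose P : 'M['F_2]_(6, size C) := \matrix_(k, j) ((k : nat) == p j)%:R.
have HM i j : (FM C *m P) i j = (nth false (nth ([::],0%N) C i).1 (p j))%:R.
  rewrite !mxE (bigD1 (Ordinal (Hp j))) //= big1 ?addr0.
    by rewrite !mxE eqxx mulr1.
  move=> k Hk; rewrite !mxE.
  have -> : ((k : nat) == p j) = false.
    apply/negbTE; apply: contra Hk => /eqP Hk'; apply/eqP/val_inj => /=; exact: Hk'.
  by rewrite mulr0.
have Htr : is_trig_mx (FM C *m P)^T.
  apply/is_trig_mxP => i j Hij; rewrite mxE HM.
  by rewrite (negbTE (tri_nth Htri Hij (ltn_ord _))).
have Hdet : \det (FM C *m P)^T = 1.
  rewrite (det_trig Htr); apply: big1 => i _; rewrite mxE HM.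
  by case/andP: (Hc i) => _ ->.
have Hu : (FM C *m P) \in unitmx by rewrite -unitmx_tr unitmxE Hdet unitr1.
by rewrite -{1}(mxrank_unit Hu) mxrankM_maxl.
Qed.

Lemma cert_rows C us i : checkcert C us ->
  row i (FM C) = toF2 (nth ([::],0%N) C i).1 /\
  (nth ([::],0%N) C i).1 \in E2 /\ perp (nth ([::],0%N) C i).1 us.
Proof.
move=> /andP[Hall _]; rewrite rowK.
by case/andP: (allP Hall _ (mem_nth ([::],0%N) (ltn_ord i))) => /andP[/andP[-> ->] _].
Qed.

Definition hypZ (GA GB : 'M['F_2]_(5,6)) :=
  forall f, f \in E2 -> toF2 f *m GA^T = 0 -> (toF2 f <= GB)%MS.

Lemma certB (GA GB : 'M['F_2]_(5,6)) k (R : 'M_(k,6)) us C :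
  (GA <= R)%MS -> (forall f, f \in E2 -> perp f us -> toF2 f *m R^T = 0) ->
  hypZ GA GB -> checkcert C us -> (FM C <= GB)%MS /\ (size C <= \rank (FM C))%N.
Proof.
move=> sGR Hperp hZ Hc; split; last exact: cert_rank Hc.
apply/row_subP => i; have [-> [HE Hp]] := cert_rows i Hc.
apply: hZ => //; have [X ->] := submxP sGR.
by rewrite trmx_mul mulmxA Hperp // mul0mx.
Qed.

Lemma xorF2 (a b x y : bool) :
  ((xorb (a && x) (b && y))%:R : 'F_2) = a%:R * x%:R + b%:R * y%:R.
Proof.
by case: a; case: b; case: x; case: y;
  rewrite /= ?mulr1 ?mul1r ?mulr0 ?mul0r ?addr0 ?add0r ?F2_11.
Qed.

Lemma F2_b (c : 'F_2) : c = (c == 1)%:R.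
Proof. by case: (F2_cases c) => ->. Qed.

Lemma half (GA GB : 'M['F_2]_(5,6)) : (\rank GA <= 2)%N -> GA *m GB^T = 0 ->
  (\rank GA + \rank GB = 5)%N -> hypZ GA GB -> hypZ GB GA -> False.
Proof.
move=> Ha HAB Hr hZ hX.
have key k (R : 'M['F_2]_(k,6)) : (GA <= R)%MS -> (R <= GA)%MS -> \rank GA = k -> False.
  case: k R => [|[|[|k]]] R sGR sRG rk; rewrite rk in Hr; rewrite ?rk // in Ha.
  - have Hp : forall f, f \in E2 -> perp f [::] -> toF2 f *m R^T = 0.
      by move=> f _ _; apply/matrixP => i [].
    case/andP: check0_ok => Hc H6.
    have [sub rk'] := certB sGR Hp hZ Hc.
    have := leq_trans (leq_trans H6 rk') (mxrankS sub).
    have HB : \rank GB = 5%N by move: Hr; rewrite add0n.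
    by rewrite HB.
  - pose us := [:: enc R].
    have Hp : forall f, f \in E2 -> perp f us -> toF2 f *m R^T = 0.
      move=> f HE /andP[Hd _]; apply/matrixP => i j; rewrite !ord1 -{1}(toF2_enc R).
      by rewrite dotF2 ?size_enc ?E2_size6 // (negbTE Hd) !mxE.
    case/andP: (allP check1_ok _ (allv_mem (size_enc R))) => Hc H5.
    have [sub rk'] := certB sGR Hp hZ Hc.
    have := leq_trans (leq_trans H5 rk') (mxrankS sub).
    have HB : \rank GB = 4%N by apply/eqP; rewrite -(eqn_add2l 1) Hr.
    by rewrite HB.
  - pose u1 := enc (row 0 R); pose u2 := enc (row 1 R); pose us := [:: u1; u2].
    have Hj (j : 'I_2) : row j R = toF2 (enc (row j R)) /\ enc (row j R) \in us.
      split; first by rewrite toF2_enc.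
      have : j = 0 \/ j = 1.
        by case: j => [[|[|]]] // ?; [left|right]; apply: val_inj.
      by case=> ->; rewrite !inE eqxx ?orbT.
    have Hp : forall f, f \in E2 -> perp f us -> toF2 f *m R^T = 0.
      move=> f HE Hperp; apply/matrixP => i j; rewrite !ord1 mulTr_entry.
      case: (Hj j) => Hrow Hin; rewrite Hrow.
      by rewrite dotF2 ?size_enc ?E2_size6 // (negbTE (allP Hperp _ Hin)) !mxE.
    have := allP (allP check2_ok _ (allv_mem (size_enc (row 0 R)))) _
                 (allv_mem (size_enc (row 1 R))).
    rewrite -/u1 -/u2 -/us; set C := cert us.
    case/andP => Hc Hcase.
    have [sub rk'] := certB sGR Hp hZ Hc.
    have HB : \rank GB = 3%N by apply/eqP; rewrite -(eqn_add2l 2) Hr.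
    case/orP: Hcase => [H4|/andP[/eqP H3 /hasP[e HeE /andP[/andP[HeE' Hperp] Hns]]]].
      by have := leq_trans (leq_trans H4 rk') (mxrankS sub); rewrite HB.
    have sBF : (GB <= FM C)%MS.
      rewrite -(mxrank_leqif_sup sub).2 eqn_leq mxrankS // HB.
      exact: leq_trans (eq_leq (esym H3)) rk'.
    have He0 : toF2 e *m (FM C)^T = 0.
      apply/matrixP => i j; rewrite !ord1 mulTr_entry.
      have [-> [HfE _]] := cert_rows j Hc.
      rewrite dotF2 ?E2_size6 //.
      have Hin : (nth ([::],0%N) C j).1 \in [seq fp.1 | fp <- C] by apply: map_f; exact: mem_nth.
      by rewrite (negbTE (allP Hperp _ Hin)) !mxE.
    have HeB : toF2 e *m GB^T = 0.
      by have [Y ->] := submxP sBF; rewrite trmx_mul mulmxA He0 mul0mx.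
    have /submxP [c Hec] := submx_trans (hX e HeE HeB) sGR.
    move: Hns; apply/negP/negPn/hasP.
    exists (c 0 0 == 1, c 0 1 == 1); first by rewrite /= !inE; case: (c 0 0 == 1); case: (c 0 1 == 1).
    apply/allP => k; rewrite mem_iota add0n => /andP[_ Hk] /=.
    have := congr1 (fun v : 'rV_6 => v 0 (Ordinal Hk)) Hec.
    rewrite mulmx_sum_row !big_ord_recl big_ord0 addr0 !mxE /=.
    have HR (i : 'I_2) k' : R i k' = (nth false (enc (row i R)) k')%:R.
      have := congr1 (fun v : 'rV_6 => v 0 k') (toF2_enc (row i R)).
      by rewrite !mxE => ->.
    move=> He'; rewrite !HR [c 0 ord0]F2_b [c 0 (lift ord0 ord0)]F2_b -xorF2 in He'.
    rewrite (b2F_inj He').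
    have E0 : (ord0 : 'I_2) = 0 by apply: val_inj.
    have E1 : (lift ord0 ord0 : 'I_2) = 1 by apply: val_inj.
    rewrite E0 E1; exact: eqxx.
apply: (key _ (row_base GA)) => //; by rewrite eq_row_base.
Qed.

Lemma core (GA GB : 'M['F_2]_(5,6)) : GA *m GB^T = 0 ->
  (\rank GA + \rank GB = 5)%N -> hypZ GA GB -> hypZ GB GA -> False.
Proof.
move=> HAB Hr hZ hX.
case: (leqP (\rank GA) 2) => H; first exact: half H HAB Hr hZ hX.
apply: (half (GA:=GB) (GB:=GA)) => //.
- rewrite -(leq_add2l (\rank GA)) Hr.
  by rewrite -(leq_add2r 2 3) in H.
- by have := congr1 trmx HAB; rewrite trmx_mul trmxK trmx0.
- by rewrite addnC.
Qed.

Definition xb (a : P1) : bool := match a with PX | PY => true | _ => false end.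
Definition zb (a : P1) : bool := match a with PZ | PY => true | _ => false end.
Definition xv (p : pauli 6) : 'rV['F_2]_6 := \row_k (xb (op p k))%:R.
Definition zv (p : pauli 6) : 'rV['F_2]_6 := \row_k (zb (op p k))%:R.

Lemma xv_mul p q : xv (pmul p q) = xv p + xv q.
Proof.
apply/rowP => k; rewrite !mxE /=.
by case: (op p k); case: (op q k); rewrite /= ?addr0 ?add0r ?F2_11.
Qed.
Lemma zv_mul p q : zv (pmul p q) = zv p + zv q.
Proof.
apply/rowP => k; rewrite !mxE /=.
by case: (op p k); case: (op q k); rewrite /= ?addr0 ?add0r ?F2_11.
Qed.
Lemma xv_pid : xv (pid 6) = 0. Proof. by apply/rowP => k; rewrite !mxE. Qed.
Lemma zv_pid : zv (pid 6) = 0. Proof. by apply/rowP => k; rewrite !mxE. Qed.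

Lemma op_eq p q : xv p = xv q -> zv p = zv q -> forall k, op p k = op q k.
Proof.
move=> Hx Hz k; have := congr1 (fun v : 'rV_6 => v 0 k) Hx.
have := congr1 (fun v : 'rV_6 => v 0 k) Hz; rewrite !mxE => /b2F_inj Hz' /b2F_inj Hx'.
by move: Hx' Hz'; case: (op p k); case: (op q k).
Qed.

Lemma upto_vec p q : eq_up_to_phase p q -> xv p = xv q /\ zv p = zv q.
Proof. by move=> H; split; apply/rowP => k; rewrite !mxE H. Qed.

Definition anti (a b : P1) : bool := (xb a && zb b) (+) (zb a && xb b).

Lemma mul1_swap a b : ((mul1 b a).1 = (mul1 a b).1 + 2 * anti a b %[mod 4])%N.
Proof. by case: a; case: b. Qed.
Lemma mul1_swap2 a b : (mul1 b a).2 = (mul1 a b).2.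
Proof. by case: a; case: b. Qed.

Lemma phase_swap p q : (phase (pmul q p) =
   phase (pmul p q) + 2 * \sum_(k < 6) anti (op p k) (op q k) %[mod 4])%N.
Proof.
rewrite /= (addnC (phase q)) -!addnA; apply/eqP; rewrite !eqn_modDl; apply/eqP.
rewrite -modn_summ (eq_bigr (fun k => ((mul1 (op p k) (op q k)).1 + 2 * anti (op p k) (op q k)) %% 4)%N).
  by rewrite modn_summ big_split /= -big_distrr.
by move=> k _; rewrite mul1_swap.
Qed.

Lemma mod4_cancel a b : (a = a + b %[mod 4])%N -> (b %% 4 = 0)%N.
Proof. by move/eqP; rewrite -{1}[a]addn0 eqn_modDl mod0n => /eqP <-. Qed.

Lemma mod4_even N : ((2 * N) %% 4 = 0)%N -> ~~ odd N.
Proof. by rewrite -[4%N]/(2 * 2)%N -muln_modr modn2; case: (odd N). Qed.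

Definition symp (p q : pauli 6) : 'F_2 :=
  \sum_(k < 6) ((xb (op p k))%:R * (zb (op q k))%:R + (zb (op p k))%:R * (xb (op q k))%:R).

Lemma anti_F2 a b : ((anti a b : nat)%:R : 'F_2) =
  (xb a)%:R * (zb b)%:R + (zb a)%:R * (xb b)%:R.
Proof.
by case: a; case: b; rewrite /= ?mulr1 ?mul1r ?mulr0 ?mul0r ?addr0 ?add0r ?F2_11.
Qed.

Lemma symp_N p q : symp p q = (odd (\sum_(k < 6) anti (op p k) (op q k)))%:R.
Proof. by rewrite -natF2 natr_sum; apply: eq_bigr => k _; rewrite anti_F2. Qed.

Lemma comm_symp p q : pcommute p q -> symp p q = 0.
Proof.
case=> Hph _; rewrite symp_N.
have := phase_swap p q; rewrite -Hph => /mod4_cancel /mod4_even.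
by move/negbTE => ->.
Qed.

Lemma anti_symp p q : panticommute p q -> symp p q = 1.
Proof.
case=> Hph _; rewrite symp_N.
have H := phase_swap p q.
move: Hph; rewrite [phase (pneg _)]/= -modnDml H modnDml -addnA => /mod4_cancel.
rewrite -[(2 * _ + 2)%N]/(2 * _ + 2 * 1)%N -mulnDr => /mod4_even.
by rewrite addn1 /=; case: (odd _).
Qed.

Definition GA (g : 'I_5 -> pauli 6) : 'M['F_2]_(5,6) := \matrix_(i < 5) xv (g i).
Definition GB (g : 'I_5 -> pauli 6) : 'M['F_2]_(5,6) := \matrix_(i < 5) zv (g i).

Lemma in_gen_vec (P : pred 'I_5) g s : in_gen P g s ->
  exists c : 'rV_5, xv s = c *m GA g /\ zv s = c *m GB g.
Proof.
elim=> [|i _|p q _ [c1 [h1 h2]] _ [c2 [h3 h4]]].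
- by exists 0; rewrite !mul0mx xv_pid zv_pid.
- by exists (delta_mx 0 i); rewrite -!rowE !rowK.
- by exists (c1 + c2); rewrite xv_mul zv_mul h1 h2 h3 h4 !mulmxDl.
Qed.

Lemma Xt_zb (p : pauli 6) : X_type p -> forall k, zb (op p k) = false.
Proof. by case=> _ H k; case: (H k) => ->. Qed.
Lemma Zt_xb (p : pauli 6) : Z_type p -> forall k, xb (op p k) = false.
Proof. by case=> _ H k; case: (H k) => ->. Qed.

Lemma HAB g : (forall i, X_type (g i) \/ Z_type (g i)) ->
  (forall i j, pcommute (g i) (g j)) -> GA g *m (GB g)^T = 0.
Proof.
move=> Ht Hc; apply/matrixP => i j; rewrite !mxE.
case: (Ht i) => [HX|HZ].
  rewrite -[RHS](comm_symp (Hc i j)) /symp; apply: eq_bigr => k _.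
  by rewrite !mxE (Xt_zb HX) mul0r addr0.
by apply: big1 => k _; rewrite !mxE (Zt_xb HZ) mul0r.
Qed.

Lemma ranks_le g : (forall i, X_type (g i) \/ Z_type (g i)) ->
  (\rank (GA g) + \rank (GB g) <= 5)%N.
Proof.
move=> Ht.
have H1 : (1%:M <= kermx (GA g) + kermx (GB g))%MS.
  apply/row_subP => i; rewrite row1.
  case: (Ht i) => [HX|HZ].
    apply: submx_trans (addsmxSr _ _); apply/sub_kermxP.
    rewrite -rowE rowK; apply/rowP => k; by rewrite !mxE (Xt_zb HX).
  apply: submx_trans (addsmxSl _ _); apply/sub_kermxP.
  rewrite -rowE rowK; apply/rowP => k; by rewrite !mxE (Zt_xb HZ).
have := leq_trans (mxrankS H1) (mxrank_adds_leqif _ _).1.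
rewrite mxrank1 !mxrank_ker.
have := rank_leq_row (GA g); have := rank_leq_row (GB g).
move: (\rank (GA g) : nat) (\rank (GB g) : nat) => a b Hb Ha H.
case: a Ha H => [|[|[|[|[|[|a]]]]]] // _;
  by case: b Hb => [|[|[|[|[|[|b]]]]]].
Qed.

Lemma vxx (v : 'rV['F_2]_6) : v + v = 0.
Proof. by apply/rowP => k; rewrite !mxE F2_xx. Qed.

Lemma ranks_ge g : independent g -> (5 <= \rank (GA g) + \rank (GB g))%N.
Proof.
move=> Hind; rewrite leqNgt; apply/negP => Hlt.
pose K := (kermx (GA g) :&: kermx (GB g))%MS.
have HK : (0 < \rank K)%N.
  have := mxrank_sum_cap (kermx (GA g)) (kermx (GB g)).
  rewrite !mxrank_ker -/K.
  have := rank_leq_col (kermx (GA g) + kermx (GB g))%MS.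
  move: (\rank (kermx (GA g) + kermx (GB g))%MS : nat) (\rank K : nat) => s r Hs.
  move: Hlt; move: (\rank (GA g) : nat) (\rank (GB g) : nat) => a b Hab.
  case: r => [|r] // Heq; rewrite addn0 in Heq; rewrite Heq in Hs; clear Heq.
  case: a Hab Hs => [|[|[|[|[|a]]]]];
    case: b => [|[|[|[|[|b]]]]] //; rewrite ?addnS ?addSn //.
have [i Hi] : exists i, row i K != 0.
  case: (pickP (fun i => row i K != 0)) => [i Hi|H0]; first by exists i.
  move: HK; rewrite lt0n mxrank_eq0 => /negP; case.
  by apply/eqP/row_matrixP => i; rewrite row0; apply/eqP; move: (H0 i) => /negbFE.
set c := row i K in Hi.
have cA : c *m GA g = 0.
  by apply/sub_kermxP; apply: submx_trans (row_sub _ _) (capmxSl _ _).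
have cB : c *m GB g = 0.
  by apply/sub_kermxP; apply: submx_trans (row_sub _ _) (capmxSr _ _).
have [j Hj] : exists j, c 0 j != 0.
  case: (pickP (fun j => c 0 j != 0)) => [j Hj|H0]; first by exists j.
  by case/negP: Hi; apply/eqP/rowP => j; rewrite [RHS]mxE; apply/eqP; move: (H0 j) => /negbFE.
have cj1 : c 0 j = 1 by case: (F2_cases (c 0 j)) Hj => ->; rewrite ?eqxx.
apply: (Hind j).
exists (\big[@pmul 6/pid 6]_(i < 5 | (i != j) && (c 0 i == 1)) g i); split.
  apply: big_ind => //; first exact: gen_one.
    by move=> x y; exact: gen_mul.
  by move=> k /andP[Hk _]; exact: gen_g.
have Hsum (v : 'I_5 -> 'rV['F_2]_6) M : M = \matrix_(i < 5) v i -> c *m M = 0 ->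
   \sum_(i < 5 | (i != j) && (c 0 i == 1)) v i = v j.
  move=> -> HM; move: HM; rewrite mulmx_sum_row (bigD1 j) //= cj1 scale1r rowK.
  rewrite (eq_bigr (fun i => if c 0 i == 1 then v i else 0)); last first.
    by move=> k _; rewrite rowK; case: (F2_cases (c 0 k)) => ->; rewrite ?scale0r ?scale1r ?eqxx.
  move=> H; rewrite big_mkcondr /=.
  by rewrite -[LHS]add0r -[X in X + _](vxx (v j)) -addrA H addr0.
apply: op_eq.
  rewrite (big_morph xv xv_mul xv_pid); exact: Hsum cA.
rewrite (big_morph zv zv_mul zv_pid); exact: Hsum cB.
Qed.

Lemma err_of f (a : P1) : f \in E2 -> a <> PI -> exists Ea Eb : pauli 6,
  is_error Ea /\ is_error Eb /\
  forall k, op (pmul (padj Ea) Eb) k = if nth false f k then a else PI.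
Proof.
rewrite mem_cat => /orP [/mapP [i Hi ->] | /flatten_mapP [i Hi /mapP [j Hj ->]]] Ha.
  rewrite mem_iota add0n in Hi; case/andP: Hi => _ Hi.
  exists (pid 6), (err (Ordinal Hi) a); split; first by left.
  split; first (by right; exists (Ordinal Hi), a).
  by move=> k /=; rewrite /unitv (nth_map 0%N) ?size_iota // nth_iota.
rewrite mem_iota add0n in Hi; case/andP: Hi => _ Hi.
rewrite mem_iota in Hj; case/andP: Hj => Hij Hj.
have Hj6 : (j < 6)%N by apply: leq_trans Hj _; rewrite addSn subnKC.
exists (err (Ordinal Hi) a), (err (Ordinal Hj6) a); split; first (by right; exists (Ordinal Hi), a).
split; first (by right; exists (Ordinal Hj6), a).
move=> k /=; rewrite /pairv (nth_map 0%N) ?size_iota // nth_iota // add0n.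
have -> : (k == Ordinal Hi) = (k == i :> nat) by [].
have -> : (k == Ordinal Hj6) = (k == j :> nat) by [].
case Eki : (k == i :> nat); case Ekj : (k == j :> nat) => /=.
- by move: Hij; rewrite -(eqP Eki) (eqP Ekj) ltnn.
- by case: a Ha.
- by case: a Ha.
- by [].
Qed.

Lemma proposition1_aux :
  ~ exists g : 'I_5 -> pauli 6,
      (forall i, X_type (g i) \/ Z_type (g i)) /\
      (forall i j, pcommute (g i) (g j)) /\
      independent g /\
      (forall Ea Eb : pauli 6, is_error Ea -> is_error Eb ->
         (exists s, in_gen predT g s /\ panticommute (pmul (padj Ea) Eb) s) \/
         (exists s, in_gen predT g s /\ eq_up_to_phase s (pmul (padj Ea) Eb))).
Proof.
move=> [g [Ht [Hc [Hind He]]]].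
apply: (core (HAB Ht Hc)).
- by apply/eqP; rewrite eqn_leq ranks_le // ranks_ge.
- move=> f HE Hperp.
  have [Ea [Eb [HEa [HEb Hop]]]] := err_of (a:=PZ) HE (fun H => match H with end).
  case: (He Ea Eb HEa HEb) => [[s [Hs Hanti]] | [s [Hs Hup]]].
    have := anti_symp Hanti; have [c [Hxs _]] := in_gen_vec Hs.
    have -> : symp (pmul (padj Ea) Eb) s = (toF2 f *m (GA g)^T *m c^T) 0 0.
      rewrite -mulmxA -trmx_mul -Hxs /symp !mxE; apply: eq_bigr => k _; rewrite Hop !mxE.
      by case: (nth false f k); rewrite /= ?mul1r ?mul0r ?addr0 ?add0r.
    by rewrite Hperp mul0mx mxE => /eqP; rewrite eq_sym oner_eq0.
  have [_ Hz] := upto_vec Hup; have [c [_ Hzs]] := in_gen_vec Hs.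
  have HzE : zv (pmul (padj Ea) Eb) = toF2 f.
    by apply/rowP => k; rewrite !mxE Hop; case: (nth false f k).
  by rewrite -HzE -Hz Hzs submxMl.
- move=> f HE Hperp.
  have [Ea [Eb [HEa [HEb Hop]]]] := err_of (a:=PX) HE (fun H => match H with end).
  case: (He Ea Eb HEa HEb) => [[s [Hs Hanti]] | [s [Hs Hup]]].
    have := anti_symp Hanti; have [c [_ Hzs]] := in_gen_vec Hs.
    have -> : symp (pmul (padj Ea) Eb) s = (toF2 f *m (GB g)^T *m c^T) 0 0.
      rewrite -mulmxA -trmx_mul -Hzs /symp !mxE; apply: eq_bigr => k _; rewrite Hop !mxE.
      by case: (nth false f k); rewrite /= ?mul1r ?mul0r ?addr0 ?add0r.
    by rewrite Hperp mul0mx mxE => /eqP; rewrite eq_sym oner_eq0.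
  have [Hx _] := upto_vec Hup; have [c [Hxs _]] := in_gen_vec Hs.
  have HxE : xv (pmul (padj Ea) Eb) = toF2 f.
    by apply/rowP => k; rewrite !mxE Hop; case: (nth false f k).
  by rewrite -HxE -Hx Hxs submxMl.
Qed.

Local Close Scope ring_scope.

Theorem proposition1 :
  ~ exists g : 'I_5 -> pauli 6,
      (forall i, X_type (g i) \/ Z_type (g i)) /\
      (forall i j, pcommute (g i) (g j)) /\
      independent g /\
      (forall Ea Eb : pauli 6, is_error Ea -> is_error Eb ->
         (exists s, in_gen predT g s /\ panticommute (pmul (padj Ea) Eb) s) \/
         (exists s, in_gen predT g s /\ eq_up_to_phase s (pmul (padj Ea) Eb))).
Proof. exact: proposition1_aux. Qed.
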